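(* Let $m_1,m_2,m_3\ge 2$ be integers and let $P^{\mathbf{i}}\in\mathbb{R}^3$ be points indexed by multi-indices $\mathbf{i}=(i_1,i_2,i_3)$ with $i_j\in\{1,\dots,m_j\}$. For $k\in\{1,2,3\}$ let $e_k$ be the $k$-th unit multi-index, $I(k)=\{\mathbf{i}: i_j\in\{1,\dots,m_j\}\text{ for }j\ne k,\ i_k\in\{1,\dots,m_k-1\}\}$, $\Delta_k^{\mathbf{i}}=P^{\mathbf{i}+e_k}-P^{\mathbf{i}}$ for $\mathbf{i}\in I(k)$, and $C_k=\mathrm{coni}\{\Delta_k^{\mathbf{i}}:\mathbf{i}\in I(k)\}$. Define $H_1(x)=x_1-x_2-x_3$, $H_2(x)=x_1-x_2+x_3$, $H_3(x)=x_1+x_2-x_3$, $H_4(x)=x_1+x_2+x_3$ and $C_1^0=\{x: H_1(x)>0,H_2(x)>0,H_3(x)>0,H_4(x)>0\}\cup\{0\}$, $C_2^0=\{x: H_1(x)<0,H_2(x)<0,H_3(x)>0,H_4(x)>0\}\cup\{0\}$, $C_3^0=\{x: H_1(x)<0,H_2(x)>0,H_3(x)<0,H_4(x)>0\}\cup\{0\}$. If $\mathrm{conv}\{\Delta_k^{\mathbf{i}}:\mathbf{i}\in I(k)\}\subset C_k^0$ for $k=1,2,3$, then $C_1,C_2,C_3$ are cotransverse.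
   Context: The conical hull of $X\subseteq\mathbb{R}^3$ is $\mathrm{coni}\,X=\{\sum_{i=1}^n\lambda_i x_i: x_i\in X,\ n\in\mathbb{N},\ \lambda_i\ge0\}$ and the convex hull is $\mathrm{conv}\,X=\{\sum_{i=1}^n\lambda_i x_i: x_i\in X,\ n\in\mathbb{N},\ \lambda_i\ge0,\ \sum_i\lambda_i=1\}$; the convex hull of several cones means the convex hull of their union. A subset $X$ is a cone if $x\in X,\lambda\ge0\Rightarrow\lambda x\in X$. Two cones $C,D$ are transverse if $C\cup(-C)$ and $D\cup(-D)$ intersect only in $\{0\}$. Three cones $C_1,C_2,C_3$ are cotransverse if the origin is a vertex of the convex hull of $C_1,C_2,C_3$ and, for every $\{i,j,k\}=\{1,2,3\}$, $C_i$ and the convex hull of $C_j,C_k$ are transverse. *)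

(* Defs.v *)
From HB Require Import structures.
From mathcomp Require Import all_boot all_order all_algebra.
From mathcomp Require Import reals.
Set Implicit Arguments. Unset Strict Implicit. Unset Printing Implicit Defensive.
Import Order.TTheory GRing.Theory Num.Theory.
Local Open Scope ring_scope.

Section Defs.
Variable R : realType.
Notation vec := 'rV[R]_3.

Definition c1 : 'I_3 := @Ordinal 3 0 isT.
Definition c2 : 'I_3 := @Ordinal 3 1 isT.
Definition c3 : 'I_3 := @Ordinal 3 2 isT.
Definition x1 (x : vec) := x ord0 c1.
Definition x2 (x : vec) := x ord0 c2.
Definition x3 (x : vec) := x ord0 c3.

Definition coni (X : vec -> Prop) : vec -> Prop := fun v =>
  exists (n : nat) (x : 'I_n -> vec) (l : 'I_n -> R),
    (forall i, X (x i)) /\ (forall i, 0 <= l i) /\ v = \sum_(i < n) l i *: x i.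

Definition conv (X : vec -> Prop) : vec -> Prop := fun v =>
  exists (n : nat) (x : 'I_n -> vec) (l : 'I_n -> R),
    (forall i, X (x i)) /\ (forall i, 0 <= l i) /\ \sum_(i < n) l i = 1 /\
    v = \sum_(i < n) l i *: x i.

Definition setU2 (X Y : vec -> Prop) : vec -> Prop := fun v => X v \/ Y v.
Definition setU3 (X Y Z : vec -> Prop) : vec -> Prop := fun v => X v \/ Y v \/ Z v.

Definition set_sub (X Y : vec -> Prop) := forall v, X v -> Y v.

Definition transverse (C D : vec -> Prop) :=
  forall v, (C v \/ C (- v)) -> (D v \/ D (- v)) -> v = 0.

Definition is_vertex (K : vec -> Prop) (x : vec) :=
  K x /\ forall (y z : vec) (t : R), K y -> K z -> 0 < t < 1 ->
    x = t *: y + (1 - t) *: z -> y = x /\ z = x.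

Definition cotransverse (C1 C2 C3 : vec -> Prop) :=
  is_vertex (conv (setU3 C1 C2 C3)) 0 /\
  transverse C1 (conv (setU2 C2 C3)) /\
  transverse C2 (conv (setU2 C1 C3)) /\
  transverse C3 (conv (setU2 C1 C2)).

Definition H1 (x : vec) := x1 x - x2 x - x3 x.
Definition H2 (x : vec) := x1 x - x2 x + x3 x.
Definition H3 (x : vec) := x1 x + x2 x - x3 x.
Definition H4 (x : vec) := x1 x + x2 x + x3 x.

Definition C1_0 : vec -> Prop := fun x =>
  (0 < H1 x /\ 0 < H2 x /\ 0 < H3 x /\ 0 < H4 x) \/ x = 0.
Definition C2_0 : vec -> Prop := fun x =>
  (H1 x < 0 /\ H2 x < 0 /\ 0 < H3 x /\ 0 < H4 x) \/ x = 0.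
Definition C3_0 : vec -> Prop := fun x =>
  (H1 x < 0 /\ 0 < H2 x /\ H3 x < 0 /\ 0 < H4 x) \/ x = 0.

(* Difference vectors Delta_k^i, i in I(k); multi-indices are 0-based:
   i_j ranges over 'I_m_j. *)
Definition Delta1 (m1 m2 m3 : nat) (P : 'I_m1 -> 'I_m2 -> 'I_m3 -> vec)
  : vec -> Prop := fun v =>
  exists (i1 j1 : 'I_m1) (i2 : 'I_m2) (i3 : 'I_m3),
    val j1 = (val i1).+1 /\ v = P j1 i2 i3 - P i1 i2 i3.
Definition Delta2 (m1 m2 m3 : nat) (P : 'I_m1 -> 'I_m2 -> 'I_m3 -> vec)
  : vec -> Prop := fun v =>
  exists (i1 : 'I_m1) (i2 j2 : 'I_m2) (i3 : 'I_m3),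
    val j2 = (val i2).+1 /\ v = P i1 j2 i3 - P i1 i2 i3.
Definition Delta3 (m1 m2 m3 : nat) (P : 'I_m1 -> 'I_m2 -> 'I_m3 -> vec)
  : vec -> Prop := fun v =>
  exists (i1 : 'I_m1) (i2 : 'I_m2) (i3 j3 : 'I_m3),
    val j3 = (val i3).+1 /\ v = P i1 i2 j3 - P i1 i2 i3.

End Defs.

(* Main.v *)
Require Import Defs.
From HB Require Import structures.
From mathcomp Require Import all_boot all_order all_algebra.
From mathcomp Require Import reals.
From mathcomp Require Import ring lra.
Import Order.TTheory GRing.Theory Num.Theory.
Local Open Scope ring_scope.

Section Aux.
Variable R : realType.
Notation vec := 'rV[R]_3.

Definition lin (f : vec -> R) :=
  (forall x y, f (x + y) = f x + f y) /\ (forall a x, f (a *: x) = a * f x).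

Definition pos (f : vec -> R) (S : vec -> Prop) :=
  forall x, S x -> x = 0 \/ 0 < f x.

Lemma lin0 f : lin f -> f 0 = 0.
Proof. move=> [_ fZ]; by rewrite -(scale0r (0:vec)) fZ mul0r. Qed.

Lemma lin_sum f n (x : 'I_n -> vec) (l : 'I_n -> R) : lin f ->
  f (\sum_(i < n) l i *: x i) = \sum_(i < n) l i * f (x i).
Proof.
move=> hf; elim: n x l => [|n IH] x l; first by rewrite !big_ord0 lin0.
rewrite !big_ord_recr /=; case: (hf) => fD fZ; by rewrite fD fZ IH.
Qed.

Lemma pos_coni f S : lin f -> pos f S -> pos f (coni S).
Proof.
move=> hf hS v [n [x [l [Hx [Hl ->]]]]].
have ge i : 0 <= l i * f (x i).
  case: (hS _ (Hx i)) => [->|h]; first by rewrite lin0 // mulr0.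
  by apply: mulr_ge0 => //; apply: ltW.
have := @lin_sum f n x l hf.
have: 0 <= \sum_(i < n) l i * f (x i) by apply: sumr_ge0 => i _; apply: ge.
rewrite le0r => /orP [/eqP H0|Hp] ->; last by right.
left; apply: big1 => i _.
have H1 : l i * f (x i) = 0.
  by apply: (psumr_eq0P (fun i _ => ge i) H0).
move: H1 => /eqP; rewrite mulf_eq0 => /orP [/eqP ->|/eqP Hf]; first by rewrite scale0r.
case: (hS _ (Hx i)) => [->|h]; first by rewrite scaler0.
by move: h; rewrite Hf ltxx.
Qed.

Lemma conv_coni (S : vec -> Prop) v : conv S v -> coni S v.
Proof. move=> [n [x [l [? [? [_ ?]]]]]]; by exists n, x, l. Qed.

Lemma pos_conv f S : lin f -> pos f S -> pos f (conv S).
Proof. move=> hf hS v /conv_coni; exact: pos_coni. Qed.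

Lemma pos_U2 f A B : pos f A -> pos f B -> pos f (setU2 A B).
Proof. by move=> hA hB v [/hA|/hB]. Qed.

Lemma pos_U3 f A B C : pos f A -> pos f B -> pos f C -> pos f (setU3 A B C).
Proof. by move=> hA hB hC v [/hA|[/hB|/hC]]. Qed.

Lemma linN f : lin f -> lin (fun x => - f x).
Proof. move=> [fD fZ]; split=> *; rewrite ?fD ?fZ; ring. Qed.

Lemma lin_neg f x : lin f -> f (- x) = - f x.
Proof. move=> [fD fZ]; by rewrite -scaleN1r fZ mulN1r. Qed.

Lemma transv f g C D : lin f -> lin g -> pos f C -> pos (fun x => - f x) D ->
  pos g C -> pos g D -> transverse C D.
Proof.
move=> hf hg hfC hfD hgC hgD v [Cv|Cv] [Dv|Dv].
- case: (hfC _ Cv) => // h1; case: (hfD _ Dv) => // h2; exfalso; lra.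
- case: (hgC _ Cv) => // h1; case: (hgD _ Dv) => [/eqP|h2].
    by rewrite oppr_eq0 => /eqP.
  rewrite lin_neg // in h2; exfalso; lra.
- case: (hgD _ Dv) => // h1; case: (hgC _ Cv) => [/eqP|h2].
    by rewrite oppr_eq0 => /eqP.
  rewrite lin_neg // in h2; exfalso; lra.
- case: (hfC _ Cv) => [/eqP|h1]; first by rewrite oppr_eq0 => /eqP.
  case: (hfD _ Dv) => [/eqP|h2]; first by rewrite oppr_eq0 => /eqP.
  rewrite lin_neg // in h1; rewrite lin_neg // in h2; exfalso; lra.
Qed.

Lemma vertex0 g K : lin g -> pos g K -> K 0 -> is_vertex K 0.
Proof.
move=> hg hK K0; split=> // y z t Ky Kz /andP [t0 t1] E.
have := f_equal g E; rewrite lin0 //; case: (hg) => gD gZ; rewrite gD !gZ => E'.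
have g0 := @lin0 g hg.
case: (hK _ Ky) => [y0|hy]; case: (hK _ Kz) => [z0|hz] //.
- rewrite y0 g0 in E'; exfalso; nra.
- rewrite z0 g0 in E'; exfalso; nra.
- exfalso; nra.
Qed.

Lemma lin_x1 : lin (@x1 R).
Proof. by split=> *; rewrite /x1 !mxE. Qed.
Lemma lin_x2 : lin (@x2 R).
Proof. by split=> *; rewrite /x2 !mxE. Qed.
Lemma lin_x3 : lin (@x3 R).
Proof. by split=> *; rewrite /x3 !mxE. Qed.

Lemma lin_H1 : lin (@H1 R).
Proof.
case: lin_x1 => a b; case: lin_x2 => c d; case: lin_x3 => e g.
split=> *; rewrite /H1 ?a ?b ?c ?d ?e ?g; ring.
Qed.
Lemma lin_H2 : lin (@H2 R).
Proof.
case: lin_x1 => a b; case: lin_x2 => c d; case: lin_x3 => e g.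
split=> *; rewrite /H2 ?a ?b ?c ?d ?e ?g; ring.
Qed.
Lemma lin_H3 : lin (@H3 R).
Proof.
case: lin_x1 => a b; case: lin_x2 => c d; case: lin_x3 => e g.
split=> *; rewrite /H3 ?a ?b ?c ?d ?e ?g; ring.
Qed.
Lemma lin_H4 : lin (@H4 R).
Proof.
case: lin_x1 => a b; case: lin_x2 => c d; case: lin_x3 => e g.
split=> *; rewrite /H4 ?a ?b ?c ?d ?e ?g; ring.
Qed.

Lemma conv1 (S : vec -> Prop) v : S v -> conv S v.
Proof.
move=> Sv; exists 1%N, (fun _ => v), (fun _ => 1); split=> //; split=> //.
by rewrite !big_ord1 scale1r.
Qed.

Lemma coni0 (S : vec -> Prop) : coni S 0.
Proof.
exists 0%N, (fun _ => 0), (fun _ => 0); split; first by case.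
by split; [case|rewrite big_ord0].
Qed.

End Aux.
Arguments pos {R}.
Arguments lin {R}.
Arguments linN {R f}.
Arguments vertex0 {R g K}.
Arguments transv {R f g C D}.

Theorem lemma2 (R : realType) (m1 m2 m3 : nat)
  (hm1 : (2 <= m1)%N) (hm2 : (2 <= m2)%N) (hm3 : (2 <= m3)%N)
  (P : 'I_m1 -> 'I_m2 -> 'I_m3 -> 'rV[R]_3) :
  set_sub (conv (Delta1 P)) (@C1_0 R) ->
  set_sub (conv (Delta2 P)) (@C2_0 R) ->
  set_sub (conv (Delta3 P)) (@C3_0 R) ->
  cotransverse (coni (Delta1 P)) (coni (Delta2 P)) (coni (Delta3 P)).
Proof.
move=> h1 h2 h3.
have D1 : forall v, Delta1 P v -> C1_0 v by move=> v /conv1/h1.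
have D2 : forall v, Delta2 P v -> C2_0 v by move=> v /conv1/h2.
have D3 : forall v, Delta3 P v -> C3_0 v by move=> v /conv1/h3.
have lH1 := lin_H1 R; have lH2 := lin_H2 R; have lH3 := lin_H3 R;
have lH4 := lin_H4 R.
have nH1 := linN lH1; have nH2 := linN lH2; have nH3 := linN lH3.
have p4_1 : pos (@H4 R) (coni (Delta1 P)).
  apply: pos_coni => // v /D1 [[? [? [? ?]]]|->]; by [right|left].
have p4_2 : pos (@H4 R) (coni (Delta2 P)).
  apply: pos_coni => // v /D2 [[? [? [? ?]]]|->]; by [right|left].
have p4_3 : pos (@H4 R) (coni (Delta3 P)).
  apply: pos_coni => // v /D3 [[? [? [? ?]]]|->]; by [right|left].
have pf1 : pos (@H1 R) (coni (Delta1 P)).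
  apply: pos_coni => // v /D1 [[? [? [? ?]]]|->]; by [right|left].
have pf1' : pos (fun x => - (fun x => - @H1 R x) x) (coni (Delta1 P)).
  move=> v /pf1; by rewrite opprK.
have nf1_2 : pos (fun x => - @H1 R x) (coni (Delta2 P)).
  apply: pos_coni => // v /D2 [[? [? [? ?]]]|->]; [right; lra|by left].
have nf1_3 : pos (fun x => - @H1 R x) (coni (Delta3 P)).
  apply: pos_coni => // v /D3 [[? [? [? ?]]]|->]; [right; lra|by left].
have pf2 : pos (fun x => - @H2 R x) (coni (Delta2 P)).
  apply: pos_coni => // v /D2 [[? [? [? ?]]]|->]; [right; lra|by left].
have nf2_1 : pos (fun x => - (fun x => - @H2 R x) x) (coni (Delta1 P)).
  apply: pos_coni => //; first exact: linN.
  move=> v /D1 [[? [? [? ?]]]|->]; [right; lra|by left].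
have nf2_3 : pos (fun x => - (fun x => - @H2 R x) x) (coni (Delta3 P)).
  apply: pos_coni => //; first exact: linN.
  move=> v /D3 [[? [? [? ?]]]|->]; [right; lra|by left].
have pf3 : pos (fun x => - @H3 R x) (coni (Delta3 P)).
  apply: pos_coni => // v /D3 [[? [? [? ?]]]|->]; [right; lra|by left].
have nf3_1 : pos (fun x => - (fun x => - @H3 R x) x) (coni (Delta1 P)).
  apply: pos_coni => //; first exact: linN.
  move=> v /D1 [[? [? [? ?]]]|->]; [right; lra|by left].
have nf3_2 : pos (fun x => - (fun x => - @H3 R x) x) (coni (Delta2 P)).
  apply: pos_coni => //; first exact: linN.
  move=> v /D2 [[? [? [? ?]]]|->]; [right; lra|by left].
split; [|split; [|split]].
- apply: (vertex0 lH4).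
    by apply: pos_conv => //; apply: pos_U3.
  by apply: conv1; left; apply: coni0.
- apply: (transv lH1 lH4) => //.
    by apply: pos_conv; [exact: linN lH1|apply: pos_U2].
  by apply: pos_conv => //; apply: pos_U2.
- apply: (transv nH2 lH4) => //.
    by apply: pos_conv; [exact: linN nH2|apply: pos_U2].
  by apply: pos_conv => //; apply: pos_U2.
- apply: (transv nH3 lH4) => //.
    by apply: pos_conv; [exact: linN nH3|apply: pos_U2].
  by apply: pos_conv => //; apply: pos_U2.
Qed.
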